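(* Let $\mathbb{k}$ be a field of characteristic $0$, $\mathfrak{M}$ a monomial group, and $(\epsilon_i)_{i\in I}$ a family in $\mathbb{k}[[\mathfrak{M}]]^{\prec1}$. Then $(\epsilon_i)$ is summable if and only if $(\log(1+\epsilon_i))_{i\in I}$ is summable.
   Context: A monomial group is a (multiplicatively written) totally ordered abelian group $\mathfrak{M}$, with order written $\prec$. A subset of $\mathfrak{M}$ is well-based if it has no infinite strictly increasing sequence. $\mathbb{k}[[\mathfrak{M}]]$ is the Hahn field of formal series $f=\sum_{\mathfrak{m}}f_{\mathfrak{m}}\mathfrak{m}$ ($f_{\mathfrak{m}}\in\mathbb{k}$) with well-based support $\operatorname{supp}f=\{\mathfrak{m}:f_{\mathfrak{m}}\neq0\}$. $\mathbb{k}[[\mathfrak{M}]]^{\prec1}$ is the set of $f$ with $\operatorname{supp} f\subseteq\{\mathfrak{m}:\mathfrak{m}\prec1\}$. A family $(f_i)_{i\in I}$ ($I$ a set) is summable if $\bigcup_i\operatorname{supp}f_i$ is well-based and each $\mathfrak{m}$ lies in $\operatorname{supp}f_i$ for only finitely many $i$; its sum is taken coefficientwise. For $\epsilon\in\mathbb{k}[[\mathfrak{M}]]^{\prec1}$, $\log(1+\epsilon)=\sum_{j\ge1}(-1)^{j-1}\epsilon^j/j$ (this sum exists). *)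

(* Defs.v *)
From HB Require Import structures.
From mathcomp Require Import all_boot all_order all_algebra.
From mathcomp Require Import boolp classical_sets cardinality fsbigop.
Set Implicit Arguments.
Unset Strict Implicit.
Unset Printing Implicit Defensive.
Import Order.TTheory GRing.Theory.
Local Open Scope classical_set_scope.
Local Open Scope ring_scope.

(* The carrier is a
   choiceType (harmless classically) so that finitely supported sums make sense. *)
Record monomial_group := MonomialGroup {
  mg_carrier :> choiceType;
  mg_mul : mg_carrier -> mg_carrier -> mg_carrier;
  mg_one : mg_carrier;
  mg_inv : mg_carrier -> mg_carrier;
  mg_lt : mg_carrier -> mg_carrier -> Prop;
  mg_mulA : associative mg_mul;
  mg_mulC : commutative mg_mul;
  mg_mul1 : left_id mg_one mg_mul;
  mg_mulV : left_inverse mg_one mg_inv mg_mul;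
  mg_lt_irr : forall x, ~ mg_lt x x;
  mg_lt_trans : forall x y z, mg_lt x y -> mg_lt y z -> mg_lt x z;
  mg_lt_total : forall x y, x <> y -> mg_lt x y \/ mg_lt y x;
  mg_lt_mul : forall x y z, mg_lt x y -> mg_lt (mg_mul x z) (mg_mul y z)
}.

Section Hahn.
Variables (k : fieldType) (M : monomial_group).

Definition well_based (S : set M) : Prop :=
  forall u : nat -> M, (forall n, S (u n)) -> ~ (forall n, mg_lt (u n) (u n.+1)).

(* formal series are represented by their coefficient functions M -> k *)
Definition supp (f : M -> k) : set M := [set m | f m != 0].

Definition is_hahn (f : M -> k) : Prop := well_based (supp f).

Definition is_infinitesimal (f : M -> k) : Prop :=
  is_hahn f /\ forall m, f m != 0 -> mg_lt m (mg_one M).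

Definition summable (I : Type) (f : I -> M -> k) : Prop :=
  well_based (\bigcup_(i in [set: I]) supp (f i)) /\
  forall m : M, finite_set [set i | f i m != 0].

(* coefficientwise sum of a family (meaningful when the family is summable) *)
Definition hsum (I : choiceType) (f : I -> M -> k) : M -> k :=
  fun m => \sum_(i \in [set: I]) f i m.

(* Hahn product (the sum is finite for well-based supports) *)
Definition hmul (f g : M -> k) : M -> k :=
  fun m => \sum_(p \in [set p : M * M | mg_mul p.1 p.2 = m]) f p.1 * g p.2.

Definition hone : M -> k := fun m => if m == mg_one M then 1 else 0.

Fixpoint hexp (f : M -> k) (j : nat) : M -> k :=
  if j is j'.+1 then hmul f (hexp f j') else hone.

(* log(1+eps) = sum_{j>=1} (-1)^(j-1) eps^j / j *)
Definition hlog1p (eps : M -> k) : M -> k :=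
  hsum (fun j : nat => fun m =>
    if j is 0%N then 0 else (-1) ^+ j.-1 * (j%:R)^-1 * hexp eps j m).

End Hahn.

(* Main.v *)
Require Import Defs.
From mathcomp Require Import all_boot all_order all_algebra.
From mathcomp Require Import boolp classical_sets cardinality fsbigop functions.
Local Open Scope classical_set_scope.
Set Implicit Arguments.
Unset Strict Implicit.
Unset Printing Implicit Defensive.
Import GRing.Theory.

Section Ord.
Variable M : monomial_group.
Implicit Types x y z s v : M.
Implicit Types l : seq M.

Definition mle x y := mg_lt x y \/ x = y.
Definition prodl (l : seq M) : M := foldr (@mg_mul M) (mg_one M) l.

Lemma lt_asym x y : mg_lt x y -> ~ mg_lt y x.
Proof. by move=> h1 h2; apply: (@mg_lt_irr M x); apply: mg_lt_trans h1 h2. Qed.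

Lemma mle_trans x y z : mle x y -> mle y z -> mle x z.
Proof.
case=> [h|->] // [h'|<-]; last by left.
by left; apply: mg_lt_trans h h'.
Qed.

Lemma lt_mle_trans x y z : mg_lt x y -> mle y z -> mg_lt x z.
Proof. by move=> h [h'|<-] //; apply: mg_lt_trans h h'. Qed.

Lemma mle_lt_trans x y z : mle x y -> mg_lt y z -> mg_lt x z.
Proof. by case=> [h|->] h' //; apply: mg_lt_trans h h'. Qed.

Lemma not_lt_mle x y : ~ mg_lt x y -> mle y x.
Proof.
move=> h; case: (pselect (x = y)) => [->|nxy]; first by right.
by case: (mg_lt_total nxy) => // ?; left.
Qed.

Lemma not_mle_lt x y : ~ mle x y -> mg_lt y x.
Proof.
move=> h; case: (pselect (mg_lt y x)) => // h'.
by case: h; apply: not_lt_mle.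
Qed.

Lemma mle_antisym x y : mle x y -> mle y x -> x = y.
Proof.
case=> // h [h'|//]; exfalso; exact: lt_asym h h'.
Qed.

Lemma mul1m x : mg_mul (mg_one M) x = x.
Proof. exact: mg_mul1. Qed.

Lemma mulm1 x : mg_mul x (mg_one M) = x.
Proof. by rewrite mg_mulC mul1m. Qed.

Lemma lt_mulr x y z : mg_lt x y -> mg_lt (mg_mul x z) (mg_mul y z).
Proof. exact: mg_lt_mul. Qed.

Lemma lt_mull x y z : mg_lt x y -> mg_lt (mg_mul z x) (mg_mul z y).
Proof. by rewrite ![mg_mul z _]mg_mulC; apply: lt_mulr. Qed.

Lemma mle_mulr x y z : mle x y -> mle (mg_mul x z) (mg_mul y z).
Proof. by case=> [h|->]; [left; apply: lt_mulr|right]. Qed.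

Lemma mle_mull x y z : mle x y -> mle (mg_mul z x) (mg_mul z y).
Proof. by rewrite ![mg_mul z _]mg_mulC; apply: mle_mulr. Qed.

Lemma lt_cancelr x y z : mg_lt (mg_mul x z) (mg_mul y z) -> mg_lt x y.
Proof.
move=> h; apply: not_mle_lt => -[h'|e].
  exact: (lt_asym h (lt_mulr z h')).
by subst; apply: (mg_lt_irr h).
Qed.

Lemma lt_cancell x y z : mg_lt (mg_mul z x) (mg_mul z y) -> mg_lt x y.
Proof. by rewrite ![mg_mul z _]mg_mulC; apply: lt_cancelr. Qed.

Lemma mle_cancell x y z : mle (mg_mul z x) (mg_mul z y) -> mle x y.
Proof.
case=> [h|e]; first by left; apply: lt_cancell h.
right; have := congr1 (mg_mul (mg_inv z)) e.
by rewrite !mg_mulA mg_mulV !mul1m.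
Qed.

Lemma lt1_mul s v : mg_lt s (mg_one M) -> mg_lt (mg_mul s v) v.
Proof. by move=> h; have := lt_mulr v h; rewrite mul1m. Qed.

Lemma prodl_cat l1 l2 : prodl (l1 ++ l2) = mg_mul (prodl l1) (prodl l2).
Proof.
elim: l1 => [|x l IH] /=; first by rewrite mul1m.
by rewrite IH mg_mulA.
Qed.

Lemma prodl_le1 l : (forall x, x \in l -> mg_lt x (mg_one M)) ->
  mle (prodl l) (mg_one M).
Proof.
elim: l => [|x l IH] /= h; first by right.
left; apply: (@lt_mle_trans _ (prodl l)); last first.
  by apply: IH => y yl; apply: h; rewrite inE yl orbT.
by apply: lt1_mul; apply: h; rewrite inE eqxx.
Qed.

Lemma prodl_lt1 l : (forall x, x \in l -> mg_lt x (mg_one M)) -> l != [::] ->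
  mg_lt (prodl l) (mg_one M).
Proof.
case: l => [|x l] //= h _.
apply: (@lt_mle_trans _ (prodl l)); last first.
  by apply: prodl_le1 => y yl; apply: h; rewrite inE yl orbT.
by apply: lt1_mul; apply: h; rewrite inE eqxx.
Qed.

Lemma prodl_le_mem l y : (forall x, x \in l -> mg_lt x (mg_one M)) ->
  y \in l -> mle (prodl l) y.
Proof.
elim: l => [|x l IH] //= h; rewrite inE => /orP[/eqP->|yl].
  have := @mle_mull (prodl l) (mg_one M) x; rewrite mulm1; apply.
  by apply: prodl_le1 => z zl; apply: h; rewrite inE zl orbT.
left; apply: (@lt_mle_trans _ (prodl l)).
  by apply: lt1_mul; apply: h; rewrite inE eqxx.
by apply: IH => // z zl; apply: h; rewrite inE zl orbT.
Qed.

Lemma prodl_lt_mem l y : (forall x, x \in l -> mg_lt x (mg_one M)) ->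
  y \in l -> (1 < size l)%N -> mg_lt (prodl l) y.
Proof.
case: l => [|x l] //= h; rewrite inE => /orP[/eqP->|yl] sz.
  have := @lt_mull (prodl l) (mg_one M) x; rewrite mulm1; apply.
  apply: prodl_lt1; first by move=> z zl; apply: h; rewrite inE zl orbT.
  by case: l {h} sz.
apply: (@lt_mle_trans _ (prodl l)).
  by apply: lt1_mul; apply: h; rewrite inE eqxx.
by apply: prodl_le_mem => // z zl; apply: h; rewrite inE zl orbT.
Qed.

End Ord.

Lemma inf_seq (T : choiceType) (A : set T) : infinite_set A ->
  exists f : nat -> T, (forall n, A (f n)) /\ (forall a b, f a = f b -> a = b).
Proof.
elim/choicePpointed: T => T in A *.
  by rewrite emptyE => H; exfalso; apply: H; exact: finite_set0.
move=> /infiniteP/ppcard_leP[f]; exists f; split.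
  move=> n; apply: (@funS _ _ _ _ f n) => //.
move=> a b fab; apply: (@inj _ _ _ f) => //; exact: in_setT.
Qed.

Lemma nat_min (P : nat -> Prop) : (exists n, P n) ->
  exists n, P n /\ forall m, P m -> (n <= m)%N.
Proof.
move=> ex.
have ex' : exists n, (fun n => `[< P n >]) n by case: ex => n Pn; exists n; apply/asboolP.
case: (ex_minnP ex') => n /asboolP Pn hmin; exists n; split => // m Pm.
by apply: hmin; apply/asboolP.
Qed.

Lemma incr_mono (f : nat -> nat) : (forall n, (f n < f n.+1)%N) ->
  forall a b, (a < b)%N -> (f a < f b)%N.
Proof.
move=> h a; elim=> // b IH; rewrite ltnS leq_eqVlt => /orP[/eqP->|/IH h'].
  exact: h.
exact: ltn_trans h' (h b).
Qed.

Section WB.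
Variable M : monomial_group.
Implicit Types x y z s v : M.
Implicit Types l : seq M.

Lemma chain_lt (u : nat -> M) : (forall n, mg_lt (u n) (u n.+1)) ->
  forall a b, (a < b)%N -> mg_lt (u a) (u b).
Proof.
move=> h a; elim=> // b IH; rewrite ltnS leq_eqVlt => /orP[/eqP->|/IH h'].
  exact: h.
exact: mg_lt_trans h' (h b).
Qed.

Lemma wb_sub (A B : set M) : A `<=` B -> well_based B -> well_based A.
Proof. by move=> AB wB u uA; apply: wB => n; apply: AB; apply: uA. Qed.

Lemma wb_ind (A : set M) (P : M -> Prop) : well_based A ->
  (forall x, A x -> (forall y, A y -> mg_lt x y -> P y) -> P x) ->
  forall x, A x -> P x.
Proof.
move=> wA IH x0 Ax0; apply: contrapT => nP.
have : forall x, exists y, (A x /\ ~ P x) -> (A y /\ ~ P y /\ mg_lt x y).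
  move=> x; case: (pselect (A x /\ ~ P x)) => [[Ax nPx]|h]; last by exists x.
  have : ~ (forall y, A y -> mg_lt x y -> P y) by move=> H; apply: nPx; apply: IH.
  move=> /existsNP [y] /not_implyP [Ay] /not_implyP [lxy nPy].
  by exists y.
case/choice => g hg.
pose u n := iter n g x0.
have hu : forall n, A (u n) /\ ~ P (u n).
  elim => [|n [An nPn]] //=.
  by have [? []] := hg _ (conj An nPn).
apply: (wA u) => n; first by case: (hu n).
by case: (hu n) => An nPn; case: (hg _ (conj An nPn)) => _ [].
Qed.

Lemma extract (A : set M) (s : nat -> M) : (forall n, A (s n)) -> well_based A ->
  exists phi : nat -> nat, (forall n, (phi n < phi n.+1)%N) /\
    forall a b, (a < b)%N -> mle (s (phi b)) (s (phi a)).
Proof.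
move=> sA wA.
pose peak n := forall m, (n < m)%N -> ~ mg_lt (s n) (s m).
case: (pselect (forall N, exists n, (N < n)%N /\ peak n)) => [H|H].
  case/choice: H => h hh.
  pose phi n := iter n.+1 h 0.
  have inc : forall n, (phi n < phi n.+1)%N by move=> n; rewrite /phi iterS; case: (hh (phi n)).
  exists phi; split => // a b ab.
  apply: not_lt_mle.
  have pk : peak (phi a) by rewrite /phi iterS; case: (hh (iter a h 0)).
  by apply: pk; apply: incr_mono.
exfalso; move/existsNP: H => [N HN].
have : forall n, exists m, (N < n)%N -> ((n < m)%N /\ mg_lt (s n) (s m)).
  move=> n; case: (pselect (N < n)%N) => [Nn|]; last by exists n.
  have : ~ peak n by move=> pn; apply: HN; exists n.
  move=> /existsNP [m] /not_implyP [nm] /contrapT h; by exists m.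
case/choice => g hg.
have big : forall k, (N < iter k g N.+1)%N.
  elim => [|k IH] //=; case: (hg _ IH) => h _; exact: ltn_trans IH h.
apply: (wA (fun k => s (iter k g N.+1))) => k //=.
by case: (hg _ (big k)).
Qed.

Variable S : set M.
Hypothesis wbS : well_based S.
Hypothesis S1 : forall x, S x -> mg_lt x (mg_one M).

Definition allS l := forall x, x \in l -> S x.
Definition bad (f : nat -> seq M) :=
  (forall n, allS (f n)) /\
  (forall a b, (a < b)%N -> f a <> f b /\ mle (prodl (f a)) (prodl (f b))).

Lemma mle_lt_False x y : mle x y -> mg_lt y x -> False.
Proof. by move=> h h'; apply: (@mg_lt_irr M x); apply: mle_lt_trans h h'. Qed.

Lemma split_bad f : bad f -> exists g N, bad g /\ (forall i, (i < N)%N -> g i = f i)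
  /\ (size (g N) < size (f N))%N.
Proof.
move=> [fS fB].
have [K HK] : exists K, forall n, (K <= n)%N -> f n <> [::].
  case: (pselect (exists n0, f n0 = [::])) => [[n0 e]|ne].
    exists n0.+1 => n lt e'; have [] := fB n0 n lt.
    by rewrite e e'.
  by exists 0%N => n _ e; apply: ne; exists n.
pose s n := head (mg_one M) (f (n + K)).
pose v n := behead (f (n + K)).
have fe n : f (n + K) = s n :: v n.
  by rewrite /s /v; case: (f (n + K)) (HK (n + K) (leq_addl _ _)).
have sS n : S (s n) by apply: (fS (n + K)); rewrite fe mem_head.
have [phi [phiinc phidec]] := extract sS wbS.
have phimono := incr_mono phiinc.
pose N := (phi 0 + K)%N.
pose g n := if (n < N)%N then f n else v (phi (n - N)).
have plt j : mg_lt (prodl (f (phi j + K))) (prodl (v (phi j))).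
  by rewrite fe /=; apply: lt1_mul; apply: S1.
have Nle j : (N <= phi j + K)%N.
  rewrite leq_add2r; case: j => // j; apply: ltnW; exact: phimono.
exists g, N; split; last first.
  split; first by move=> i iN; rewrite /g iN.
  by rewrite /g ltnn subnn /N fe /=.
split.
  move=> n x; rewrite /g; case: ifP => _; first exact: fS.
  move=> xv; apply: (fS (phi (n - N) + K)); by rewrite fe inE xv orbT.
move=> a b ab; rewrite /g.
case: ifPn => aN; case: ifPn => bN.
- exact: fB.
- have h1 := plt (b - N)%N.
  have [_ h2] := fB a (phi (b - N) + K)%N (leq_trans aN (Nle _)).
  have h3 := mle_lt_trans h2 h1.
  split; last by left.
  by move=> e; rewrite e in h3; apply: (mg_lt_irr h3).
- by exfalso; move: aN; rewrite -leqNgt => aN; move: (leq_ltn_trans aN (ltn_trans ab bN)); rewrite ltnn.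
- rewrite -!leqNgt in aN bN.
  have jab : (a - N < b - N)%N by rewrite ltn_sub2r // (leq_ltn_trans aN ab).
  have pab := phimono _ _ jab.
  have hk : (phi (a - N) + K < phi (b - N) + K)%N by rewrite ltn_add2r.
  have [dne hle] := fB _ _ hk.
  have hs := phidec _ _ jab.
  rewrite !fe /= in dne hle.
  set sa := s (phi (a - N)) in dne hle hs; set sb := s (phi (b - N)) in dne hle hs.
  set va := v (phi (a - N)) in dne hle *; set vb := v (phi (b - N)) in dne hle *.
  have hv : mle (prodl va) (prodl vb).
    apply: not_lt_mle => h.
    apply: (mle_lt_False hle).
    apply: (mle_lt_trans (y := mg_mul sa (prodl vb))); first exact: mle_mulr.
    exact: lt_mull.
  split => // e; apply: dne; rewrite e.
  rewrite e in hle.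
  have : mle sa sb.
    by move: hle; rewrite ![mg_mul _ (prodl vb)]mg_mulC; apply: mle_cancell.
  by move=> hab; rewrite (mle_antisym hab hs).
Qed.

Lemma no_bad f0 : ~ bad f0.
Proof.
move=> bf0.
pose ext (p : seq (seq M)) := exists f, bad f /\
  forall i, (i < size p)%N -> f i = nth [::] p i.
have : forall p, exists l, ext p ->
    (ext (rcons p l) /\ forall l', ext (rcons p l') -> (size l <= size l')%N).
  move=> p; case: (pselect (ext p)) => [ep|]; last by exists [::].
  have [n [[l [sl el]] hmin]] : exists n, (exists l, size l = n /\ ext (rcons p l)) /\
      forall m, (exists l, size l = m /\ ext (rcons p l)) -> (n <= m)%N.
    apply: nat_min; case: ep => f [bf fa].
    exists (size (f (size p))), (f (size p)); split => //.
    exists f; split => // i; rewrite size_rcons ltnS nth_rcons leq_eqVlt.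
    case/orP => [/eqP->|ip]; first by rewrite ltnn eqxx.
    by rewrite ip; apply: fa.
  exists l => _; split => // l' el'; rewrite sl; apply: hmin; by exists l'.
case/choice => pick hpick.
pose F := fix F n := if n is n'.+1 then rcons (F n') (pick (F n')) else [::].
have sizeF n : size (F n) = n by elim: n => //= n IH; rewrite size_rcons IH.
have extF n : ext (F n).
  elim: n => [|n IH]; first by exists f0.
  exact: (hpick (F n) IH).1.
pose g n := pick (F n).
have nthF m i : (i < m)%N -> nth [::] (F m) i = g i.
  elim: m => // m IH; rewrite ltnS leq_eqVlt /= nth_rcons sizeF.
  case/orP => [/eqP->|im]; first by rewrite ltnn eqxx.
  by rewrite im; apply: IH.
have gf : forall n f, (forall i, (i < size (F n.+1))%N -> f i = nth [::] (F n.+1) i) ->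
    forall i, (i <= n)%N -> f i = g i.
  by move=> n f fa i iN; rewrite fa ?sizeF // nthF.
have bg : bad g.
  split.
    move=> n; have [f [[fS _] fa]] := extF n.+1.
    by rewrite -(gf _ _ fa n (leqnn n)).
  move=> a b ab; have [f [[_ fB] fa]] := extF b.+1.
  rewrite -(gf _ _ fa a (ltnW ab)) -(gf _ _ fa b (leqnn b)).
  exact: fB.
have [g' [N [bg' [agree sz]]]] := split_bad bg.
have ext' : ext (rcons (F N) (g' N)).
  exists g'; split => // i; rewrite size_rcons sizeF ltnS nth_rcons sizeF leq_eqVlt.
  case/orP => [/eqP->|iN]; first by rewrite ltnn eqxx.
  by rewrite iN nthF // agree.
have := (hpick (F N) (extF N)).2 _ ext'.
by rewrite leqNgt sz.
Qed.

Lemma N1 : well_based [set m | exists l, allS l /\ prodl l = m].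
Proof.
move=> u hu inc.
have : forall n, exists l, allS l /\ prodl l = u n by move=> n; apply: hu.
case/choice => L hL.
apply: (@no_bad L); split; first by move=> n; case: (hL n).
move=> a b ab; have lt := chain_lt inc ab.
rewrite (hL a).2 (hL b).2; split; last by left.
move=> e; have : prodl (L a) = prodl (L b) by rewrite e.
rewrite (hL a).2 (hL b).2 => e'; rewrite e' in lt; exact: (mg_lt_irr lt).
Qed.

Lemma N2 m : finite_set [set l | allS l /\ prodl l = m].
Proof.
apply: contrapT => inf; have [f [fA finj]] := inf_seq inf.
apply: (@no_bad f); split; first by move=> n; case: (fA n).
move=> a b ab; split.
  by move=> /finj e; rewrite e ltnn in ab.
by right; rewrite (fA a).2 (fA b).2.
Qed.

End WB.

Lemma gather (M : monomial_group) (Q : M -> Prop) (l : seq M) :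
  (forall y, y \in l -> exists L, L != [::] /\ (forall x, x \in L -> Q x) /\ prodl L = y) ->
  exists L, (l != [::] -> L != [::]) /\ (forall x, x \in L -> Q x) /\ prodl L = prodl l.
Proof.
elim: l => [|y l IH] h; first by exists [::].
have [Ly [Lyn [hy py]]] := h y (mem_head _ _).
have h' : forall z, z \in l ->
    exists L, L != [::] /\ (forall x, x \in L -> Q x) /\ prodl L = z.
  by move=> z zl; apply: h; rewrite inE zl orbT.
have [L [_ [hL pL]]] := IH h'.
exists (Ly ++ L); split; first by case: Ly Lyn {hy py}.
split; last by rewrite prodl_cat py pL.
by move=> x; rewrite mem_cat => /orP[]; [apply: hy|apply: hL].
Qed.

Section Hahn2.
Local Open Scope ring_scope.
Variables (k : fieldType) (M : monomial_group).

Lemma fsbig_nz (T : choiceType) (A : set T) (F : T -> k) :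
  \sum_(x \in A) F x != 0 -> exists x, A x /\ F x != 0.
Proof.
move=> h; apply: contrapT => nh; move/eqP: h; apply; apply: fsbig1 => x Ax.
apply: contrapT => Fx; apply: nh; exists x; split => //; exact/eqP.
Qed.

Lemma fsbig_only (T : choiceType) (A : set T) (F : T -> k) a : A a ->
  (forall x, A x -> x <> a -> F x = 0) -> \sum_(x \in A) F x = F a.
Proof.
move=> Aa h; rewrite -(fsbig_widen [set a] A F) ?fsbig_set1 //.
  by move=> x ->.
by move=> x [Ax nxa]; apply: h.
Qed.

Lemma hmul_nz (f g : M -> k) m : hmul f g m != 0 ->
  exists p q, mg_mul p q = m /\ f p != 0 /\ g q != 0.
Proof.
rewrite /hmul => /fsbig_nz [[p q] [/= e h]]; exists p, q; split => //.
by move: h; rewrite mulf_eq0 negb_or => /andP.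
Qed.

Lemma hexp_supp (e : M -> k) j m : hexp e j m != 0 ->
  exists l, size l = j /\ (forall x, x \in l -> e x != 0) /\ prodl l = m.
Proof.
elim: j m => [|j IH] m /=.
  rewrite /hone; case: (m =P mg_one M) => [-> _|]; last by rewrite eqxx.
  by exists [::].
move/hmul_nz => [p [q [e1 [h1 h2]]]]; have [l [sl [hl pl]]] := IH _ h2.
exists (p :: l); split; first by rewrite /= sl.
split; last by rewrite /= pl.
by move=> x; rewrite inE => /orP[/eqP->|/hl].
Qed.

Lemma hlog_supp (e : M -> k) m : hlog1p e m != 0 ->
  exists l, l != [::] /\ (forall x, x \in l -> e x != 0) /\ prodl l = m.
Proof.
rewrite /hlog1p /hsum => /fsbig_nz [[|j] [_ h]] /=; first by rewrite eqxx in h.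
move: h; rewrite mulf_eq0 negb_or => /andP[_ /hexp_supp [l [sl [hl pl]]]].
by exists l; split => //; rewrite -size_eq0 sl.
Qed.

Lemma hexp1 (e : M -> k) m : hexp e 1 m = e m.
Proof.
rewrite /= /hmul (@fsbig_only _ _ _ (m, mg_one M)) /=.
- by rewrite /hone eqxx mulr1.
- by rewrite mulm1.
move=> [p q] /= pq ne; rewrite /hone; case: eqP => [qe|_]; last by rewrite mulr0.
by exfalso; apply: ne; rewrite qe mulm1 in pq; rewrite pq qe.
Qed.

Lemma hlog_eq (e : M -> k) m : (forall j, (1 < j)%N -> hexp e j m = 0) ->
  hlog1p e m = e m.
Proof.
move=> h; rewrite /hlog1p /hsum (@fsbig_only _ _ _ 1%N) //=.
  by rewrite expr0 mul1r invr1 mul1r; exact: hexp1.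
by move=> [|[|j]] // _ _; cbv beta iota; rewrite h // mulr0.
Qed.

Lemma transfer (I : Type) (f g : I -> M -> k) :
  summable g -> (forall i x, g i x != 0 -> mg_lt x (mg_one M)) ->
  (forall i m, f i m != 0 -> exists l, l != [::] /\
     (forall x, x \in l -> g i x != 0) /\ prodl l = m) ->
  summable f.
Proof.
move=> [wg fg] g1 hf.
pose U := \bigcup_(i in [set: I]) supp (g i).
have U1 : forall x, U x -> mg_lt x (mg_one M) by move=> x [i _ h]; apply: g1 h.
split.
  apply: (wb_sub _ (N1 wg U1)).
  move=> m [i _ h]; have [l [_ [hl pl]]] := hf i m h; exists l; split => //.
  by move=> x xl; exists i => //; exact: hl.
move=> m.
apply: (@sub_finite_set _ _ (\bigcup_(l in [set l | allS U l /\ prodl l = m])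
     [set i | g i (head (mg_one M) l) != 0])).
  move=> i /= h; have [l [ln [hl pl]]] := hf i m h; exists l.
    by split => // x xl; exists i => //; exact: hl.
  by case: l ln hl {pl} => // x r _ hl /=; apply: hl; rewrite mem_head.
apply: bigcup_finite; first exact: N2.
by move=> l _; apply: fg.
Qed.

End Hahn2.

Local Open Scope ring_scope.

Theorem corollary2p6 (k : fieldType) (M : monomial_group) (I : Type)
  (eps : I -> M -> k) :
  [pchar k] =i pred0 ->
  (forall i, is_infinitesimal (eps i)) ->
  (summable eps <-> summable (fun i => hlog1p (eps i))).
Proof.
move=> _ heps; split => hs.
  apply: (transfer hs); first by move=> i x h; apply: (heps i).2.
  by move=> i m h; apply: hlog_supp.
apply: (transfer (g := fun i => hlog1p (eps i))) => //.
  move=> i x h; have [l [ln [hl pl]]] := hlog_supp h; rewrite -pl.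
  by apply: prodl_lt1 => // y yl; apply: (heps i).2; apply: hl.
move=> i m h.
pose P m := exists l, l != [::] /\
  (forall x, x \in l -> hlog1p (eps i) x != 0) /\ prodl l = m.
move: m h; apply: (@wb_ind _ _ P); first exact: (heps i).1.
move=> m hm IH.
case: (pselect (exists j, (1 < j)%N /\ hexp (eps i) j m != 0)) => [[j [j1 hj]]|nj].
  have [l [sl [hl pl]]] := hexp_supp hj.
  have lt1 : forall z, z \in l -> mg_lt z (mg_one M).
    by move=> z zl; apply: (heps i).2; apply: hl.
  have hP : forall y, y \in l -> P y.
    move=> y yl; apply: IH; first exact: hl.
    by rewrite -pl; apply: prodl_lt_mem => //; rewrite sl.
  have [L [Ln [hL pL]]] := gather hP.
  exists L; split; first by apply: Ln; rewrite -size_eq0 sl; case: j j1 {hj sl}.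
  by split => //; rewrite pL.
exists [:: m]; split => //; split; last by rewrite /= mulm1.
move=> x; rewrite inE => /eqP->; rewrite hlog_eq // => j j1.
apply/eqP; apply: contrapT => hne; apply: nj; exists j; split => //; exact/negP.
Qed.
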